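(* Let $\beta\in\mathbb{R}\setminus\{0\}$ and let $\Gamma$ be a lattice in $\operatorname{PSL}(2,\mathbb{R})$ such that the stabilizer of $\infty$ in $\Gamma$ is $\Gamma_\infty=\{\pm\begin{pmatrix}1&k\\0&1\end{pmatrix}: k\in\mathbb{Z}\}$ and the stabilizer of $0$ in $\Gamma$ is $\Gamma_0=\{\pm\begin{pmatrix}1&0\\k\beta^2&1\end{pmatrix}: k\in\mathbb{Z}\}$ (acting by Möbius transformations). If $\mathrm{Tr}(\Gamma)$ has linear growth, then $A^2\in\operatorname{PSL}(2,\mathbb{Q})$ for every $A\in\Gamma$.
   Context: $\mathrm{Tr}(\Gamma)$ is the set of traces of all matrices in $\operatorname{SL}(2,\mathbb{R})$ projecting to elements of $\Gamma$ (so traces are taken up to sign). A set $A\subset\mathbb{R}$ has linear growth if there are constants $C,D>0$ with $\#\{a\in A: |a|\le n\}\le Cn+D$ for all $n$. $A^2\in\operatorname{PSL}(2,\mathbb{Q})$ means $A^2$ has a matrix representative with rational entries. *)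

(* Defs.v *)
From HB Require Import structures.
From mathcomp Require Import all_boot all_order all_algebra.
From mathcomp Require Import all_classical all_reals all_analysis.
Set Implicit Arguments. Unset Strict Implicit. Unset Printing Implicit Defensive.
Import Order.TTheory GRing.Theory Num.Theory.
Local Open Scope classical_set_scope.
Local Open Scope ring_scope.

(* A subgroup of PSL(2,R) is represented by its full preimage in SL(2,R):
   a set of 2x2 real matrices of determinant 1, containing 1, closed under
   product, inverse and negation (the sign ambiguity). *)
Definition psl2_subgroup (R : realType) (G : set 'M[R]_2) : Prop :=
  [/\ (forall g, G g -> \det g = 1),
      G 1%:M,
      (forall g h, G g -> G h -> G (g *m h)),
      (forall g, G g -> G (invmx g)) &
      (forall g, G g -> G (- g))].

Definition uhp (R : realType) : set (R * R) := [set z | 0 < z.2].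

(* Moebius action z |-> (a z + b)/(c z + d) in real coordinates. *)
Definition mobius (R : realType) (g : 'M[R]_2) (z : R * R) : R * R :=
  let a := g 0 0 in let b := g 0 1 in let c := g 1 0 in let d := g 1 1 in
  let x := z.1 in let y := z.2 in
  let den := (c * x + d) ^+ 2 + (c * y) ^+ 2 in
  (((a * x + b) * (c * x + d) + a * c * y ^+ 2) / den, y / den).

Definition leb2 (R : realType) :=
  ((@lebesgue_measure R) \x (@lebesgue_measure R))%E.

Definition hyp_area (R : realType) (F : set (R * R)) : \bar R :=
  (\int[@leb2 R]_(z in F) ((z.2 ^- 2)%:E))%E.

Definition discrete_sub (R : realType) (G : set 'M[R]_2) : Prop :=
  exists2 e : R, 0 < e &
    forall g, G g -> (forall i j, `|g i j - (1%:M : 'M[R]_2) i j| < e) -> g = 1%:M.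

(* Lattice: discrete subgroup of PSL(2,R) with finite covolume, i.e. admitting
   a measurable fundamental domain for its action on the upper half plane of
   finite hyperbolic area. *)
Definition psl2_lattice (R : realType) (G : set 'M[R]_2) : Prop :=
  [/\ psl2_subgroup G, discrete_sub G &
    exists F : set (R * R),
      [/\ measurable F, F `<=` @uhp R,
          (forall z, @uhp R z -> exists2 g, G g & F (mobius g z)),
          (forall g, G g -> g <> 1%:M -> g <> - 1%:M ->
             (@leb2 R).-negligible (F `&` (mobius g @^-1` F))) &
          (hyp_area F < +oo)%E]].

(* Tr(G): traces of all matrices in G (both signs, as G is closed under -). *)
Definition trace_set (R : realType) (G : set 'M[R]_2) : set R :=
  [set t | exists2 g, G g & t = \tr g].

(* Linear growth: #{a in A : |a| <= n} <= C n + D for all n (every finite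
   family of distinct such a has at most C n + D elements). *)
Definition linear_growth (R : realType) (A : set R) : Prop :=
  exists C D : R, [/\ 0 < C, 0 < D &
    forall (n : nat) (s : seq R), uniq s ->
      (forall a, a \in s -> A a /\ `|a| <= n%:R) ->
      (size s)%:R <= C * n%:R + D].

Definition is_rational (R : realType) (x : R) : Prop := exists q : rat, x = ratr q.

Definition unip_upper (R : realType) (k : int) : 'M[R]_2 :=
  \matrix_(i < 2, j < 2) (if (i == 0) && (j == 1) then k%:~R
                          else if i == j then 1 else 0).
Definition unip_lower (R : realType) (x : R) : 'M[R]_2 :=
  \matrix_(i < 2, j < 2) (if (i == 1) && (j == 0) then x
                          else if i == j then 1 else 0).

(* Main.v *)
Require Import Defs.
From HB Require Import structures.
From mathcomp Require Import all_boot all_order all_algebra.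
From mathcomp Require Import all_classical all_reals all_analysis.
From mathcomp Require Import ring lra zify.
Import Order.TTheory GRing.Theory Num.Theory.
Local Open Scope classical_set_scope.
Local Open Scope ring_scope.
Lemma count_le1 (T : eqType) (s : seq T) (P : pred T) : uniq s ->
  (forall x y, x \in s -> y \in s -> P x -> P y -> x = y) -> (count P s <= 1)%N.
Proof.
elim: s => [//|x s IH] /= /andP[xs us] H.
case Px: (P x) => /=.
  suff -> : count P s = 0%N by [].
  apply/eqP; rewrite -leqn0 leqNgt -has_count; apply/negP => /hasP[y ys Py].
  have exy : x = y by apply: H; rewrite ?inE ?ys ?eqxx ?orbT.
  by move: xs; rewrite exy ys.
apply: IH => // a b ha hb; apply: H; by rewrite inE ?ha ?hb orbT.
Qed.

Lemma undup_cat_size (T: eqType) (l r : seq T) : uniq l ->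
  (size (undup (l ++ r)) + count (mem r) l = size l + size (undup r))%N.
Proof.
move=> ul; rewrite undup_cat size_cat size_filter (undup_id ul).
have := count_predC (mem r) l.
have -> : count (predC (mem r)) l = count (fun x => x \notin r) l by apply: eq_count.
lia.
Qed.

Lemma sumn_le1 (g : nat -> nat) (s : seq nat) : (forall x, x \in s -> g x <= 1)%N ->
  (sumn (map g s) <= size s)%N.
Proof.
elim: s => [//|x s IH] H /=.
have := H x (mem_head _ _); have := IH (fun y ys => H y (mem_behead (s:=x :: s) ys)); lia.
Qed.

Lemma count_flatten_le (T : eqType) (l : seq T) (ls : seq (seq T)) :
  (count (mem (flatten ls)) l <= sumn (map (fun l' => count (mem l') l) ls))%N.
Proof.
elim: ls => [|l1 ls IH] /=; first by rewrite count_pred0.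
apply: (leq_trans _ (leq_add (leqnn _) IH)).
rewrite -count_predUI.
have -> : count (mem (l1 ++ flatten ls)) l = count (predU (mem l1) (mem (flatten ls))) l.
  by apply: eq_count => x; rewrite /= mem_cat.
by apply: leq_addr.
Qed.

Lemma union_bound (T : eqType) (f : nat -> seq T) a M : (forall i, uniq (f i)) ->
  (forall i j, i != j -> (count (mem (f j)) (f i) <= 1)%N) ->
  (sumn (map (fun i => size (f i)) (iota a M)) <=
     size (undup (flatten (map f (iota a M)))) + M * M)%N.
Proof.
move=> uf cf; elim: M a => [//|M IH] a /=.
have h1 := @undup_cat_size _ (f a) (flatten (map f (iota a.+1 M))) (uf a).
have h2 := @count_flatten_le _ (f a) (map f (iota a.+1 M)).
have h3 : (sumn (map (fun l' => count (mem l') (f a)) (map f (iota a.+1 M))) <= M)%N.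
  rewrite -map_comp.
  apply: (@leq_trans (size (iota a.+1 M))); last by rewrite size_iota.
  apply: sumn_le1 => i; rewrite mem_iota => /andP[hi _] /=; apply: cf.
  by apply/eqP => e; move: hi; rewrite e ltnn.
have := IH a.+1; lia.
Qed.
Lemma harm_big (R : realType) L :
  L%:R / 2 <= \sum_(1 <= m < (2 ^ L).+1) (m%:R : R)^-1.
Proof.
elim: L => [|L IH]; first by rewrite mul0r sumr_ge0 // => i _; rewrite invr_ge0.
rewrite (big_cat_nat _ (n := (2^L).+1)) //=; last by rewrite ltnS leq_pexp2l.
have blk : 2^-1 <= \sum_((2 ^ L).+1 <= m < (2 ^ L.+1).+1) (m%:R : R)^-1.
  rewrite (@le_trans _ _ (\sum_((2 ^ L).+1 <= i < (2 ^ L.+1).+1) (2 ^ L.+1)%:R^-1)) //=.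
    rewrite sumr_const_nat subSS expnS mul2n -addnn addnK.
    rewrite -[_ *+ 2 ^ L]mulr_natr natrD.
    have hx : (2^L)%:R != 0 :> R by rewrite pnatr_eq0 expn_eq0.
    suff -> : ((2 ^ L)%:R + (2 ^ L)%:R)^-1 * (2 ^ L)%:R = 2^-1 :> R by [].
    by field.

  apply: ler_sum_nat => i /andP[h1 h2]; rewrite lef_pV2 ?qualifE/= ?ler_nat ?ltr0n ?expn_gt0 //; lia.
have -> : (L.+1)%:R / 2 = L%:R / 2 + 2^-1 :> R by rewrite -addn1 natrD mulrDl mul1r.
exact: lerD.
Qed.

Lemma pair_prop (R : realType) (p u v w : R) (m m' k1 k2 k1' k2' : nat) :
  ~ (exists q : rat, u = ratr q * w) -> w != 0 -> m != m' ->
  p + m%:R * v + k1%:R * (u + m%:R * w) = p + m'%:R * v + k1'%:R * (u + m'%:R * w) ->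
  p + m%:R * v + k2%:R * (u + m%:R * w) = p + m'%:R * v + k2'%:R * (u + m'%:R * w) ->
  k1 = k2.
Proof.
move=> nq w0 mm e1 e2.
apply/eqP; apply: contraNT mm => k12.
have K0 : (k1%:R - k2%:R : R) != 0 by rewrite subr_eq0 eqr_nat.
set Q : R := (k1'%:R - k2'%:R) / (k1%:R - k2%:R).
have eQ : u + m%:R * w = Q * (u + m'%:R * w).
  apply: (mulfI K0); rewrite /Q mulrA [_ * (_ / _)]mulrC divfK //.
  have : (k1%:R - k2%:R) * (u + m%:R * w) = (k1'%:R - k2'%:R) * (u + m'%:R * w).
    apply/eqP; rewrite -subr_eq0; apply/eqP.
    transitivity ((p + m%:R * v + k1%:R * (u + m%:R * w)) - (p + m%:R * v + k2%:R * (u + m%:R * w))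
       - ((p + m'%:R * v + k1'%:R * (u + m'%:R * w)) - (p + m'%:R * v + k2'%:R * (u + m'%:R * w)))).
      ring.
    by rewrite e1 e2 subrr.
  by [].
case: (eqVneq Q 1) => [Q1|Q1].
  move: eQ; rewrite Q1 mul1r => /eqP; rewrite (inj_eq (addrI _)) (inj_eq (mulIf w0)) eqr_nat => ->.
  by [].
exfalso; apply: nq.
have Q1' : 1 - Q != 0 by rewrite subr_eq0 eq_sym.
exists (((k1'%:R - k2'%:R) / (k1%:R - k2%:R) * m'%:R - m%:R) / (1 - (k1'%:R - k2'%:R) / (k1%:R - k2%:R))).
rewrite !(fmorph_div, rmorphB, rmorphM, rmorph_nat, rmorph1) -/Q.
apply: (mulfI Q1'); rewrite mulrA [(1 - Q) * (_ / _)]mulrC divfK //.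
transitivity (u + m%:R * w - Q * (u + m'%:R * w) + (Q * m'%:R - m%:R) * w); first ring.
by rewrite eQ subrr add0r.
Qed.

Lemma ord2P (i : 'I_2) : i = 0 \/ i = 1.
Proof. case: i => [[|[|k]]] Hi; [left|right|by []]; exact/val_inj. Qed.

Lemma lift2 (i : 'I_2) (j : 'I_1) : lift i j = if val i == 0%N then 1 else 0.
Proof. by case: (ord2P i) => ->; apply/val_inj; case: j => [[|]]. Qed.

Lemma det22 (R : realType) (A : 'M[R]_2) : \det A = A 0 0 * A 1 1 - A 0 1 * A 1 0.
Proof.
rewrite (expand_det_row A 0) !big_ord_recl big_ord0 /cofactor !det_mx11 !mxE /=.
rewrite !lift2 /= expr0 expr1; ring.
Qed.

Lemma mul22 (R : realType) (A B : 'M[R]_2) i j : (A *m B) i j = A i 0 * B 0 j + A i 1 * B 1 j.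
Proof. by rewrite !mxE !big_ord_recl big_ord0 addr0 lift2. Qed.

Lemma tr22 (R : realType) (A : 'M[R]_2) : \tr A = A 0 0 + A 1 1.
Proof. by rewrite /mxtrace !big_ord_recl big_ord0 addr0 lift2. Qed.

Lemma up_ent (R : realType) (k : int) :
  [/\ unip_upper R k 0 0 = 1, unip_upper R k 0 1 = k%:~R, unip_upper R k 1 0 = 0 & unip_upper R k 1 1 = 1].
Proof. by rewrite !mxE. Qed.

Lemma lo_ent (R : realType) (x : R) :
  [/\ unip_lower x 0 0 = 1, unip_lower x 0 1 = 0, unip_lower x 1 0 = x & unip_lower x 1 1 = 1].
Proof. by rewrite !mxE. Qed.

Lemma trace_UL (R : realType) (A : 'M[R]_2) (k : int) (x : R) :
  \tr (A *m unip_upper R k *m unip_lower x) =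
  (A 0 0 + A 1 1) + k%:~R * A 1 0 + x * A 0 1 + k%:~R * x * A 0 0.
Proof.
have [u1 u2 u3 u4] := up_ent R k; have [l1 l2 l3 l4] := @lo_ent R x.
rewrite tr22 !mul22 u1 u2 u3 u4 l1 l2 l3 l4; ring.
Qed.

Lemma trace_LU (R : realType) (A : 'M[R]_2) (k : int) (x : R) :
  \tr (A *m unip_lower x *m unip_upper R k) =
  (A 0 0 + A 1 1) + k%:~R * A 1 0 + x * A 0 1 + k%:~R * x * A 1 1.
Proof.
have [u1 u2 u3 u4] := up_ent R k; have [l1 l2 l3 l4] := @lo_ent R x.
rewrite tr22 !mul22 u1 u2 u3 u4 l1 l2 l3 l4; ring.
Qed.

Lemma sq_rat (R : realType) (A : 'M[R]_2) (lam : R) (al be ga de : rat) :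
  A 0 0 = ratr al * lam -> A 0 1 = ratr be * lam -> A 1 0 = ratr ga * lam ->
  A 1 1 = ratr de * lam -> \det A = 1 -> forall i j, is_rational ((A *m A) i j).
Proof.
move=> h1 h2 h3 h4; rewrite det22 h1 h2 h3 h4 => hd.
have he : lam * lam * ratr (al * de - be * ga) = 1.
  by rewrite -hd rmorphB !rmorphM; ring.
have e0 : ratr (al * de - be * ga) != 0 :> R.
  by apply/eqP => e; move: he; rewrite e mulr0 => /eqP; rewrite eq_sym oner_eq0.
have hl : lam * lam = (ratr (al * de - be * ga))^-1.
  by apply: (mulIf e0); rewrite he mulVf.
move=> i j; rewrite mul22.
case: (ord2P i) => ->; case: (ord2P j) => ->; rewrite ?h1 ?h2 ?h3 ?h4.
- exists ((al * al + be * ga) / (al * de - be * ga)).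
  rewrite fmorph_div rmorphD !rmorphM -hl; ring.
- exists ((al * be + be * de) / (al * de - be * ga)).
  rewrite fmorph_div rmorphD !rmorphM -hl; ring.
- exists ((ga * al + de * ga) / (al * de - be * ga)).
  rewrite fmorph_div rmorphD !rmorphM -hl; ring.
- exists ((ga * be + de * de) / (al * de - be * ga)).
  rewrite fmorph_div rmorphD !rmorphM -hl; ring.
Qed.

Lemma AL (R : realType) (T : set R) (p u v w : R) :
  linear_growth T -> w != 0 ->
  (forall k m : nat, T (p + k%:R * u + m%:R * v + k%:R * m%:R * w)) ->
  exists q : rat, u = ratr q * w.
Proof.
move=> [C [D [C0 D0 lg]]] w0 Hf.
apply: contrapT => nq.
have s0 : forall m : nat, u + m%:R * w != 0.
  move=> m; apply/negP => /eqP e; apply: nq; exists (- m%:R).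
  rewrite rmorphN rmorph_nat; apply/eqP; rewrite -subr_eq0 -e; apply/eqP; ring.
pose W := Num.bound (`|u| + `|w|).
have hW : `|u| + `|w| < W%:R by apply: archi_boundP; rewrite addr_ge0.
pose L := Num.bound (2 * (C * W%:R + 1)).
have hL : 2 * (C * W%:R + 1) < L%:R.
  by apply: archi_boundP; rewrite mulr_ge0 // addr_ge0 // mulr_ge0 // ltW.
pose M := (2 ^ L)%N.
pose P := Num.bound (`|p| + M%:R * `|v|).
have hP : `|p| + M%:R * `|v| < P%:R by apply: archi_boundP; rewrite addr_ge0 // mulr_ge0.
pose n := Num.bound (C * P%:R + D + (M * M)%:R).
have hn : C * P%:R + D + (M * M)%:R < n%:R.
  by apply: archi_boundP; rewrite !addr_ge0 // ?mulr_ge0 // ltW.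
pose f (m : nat) := [seq p + m%:R * v + k%:R * (u + m%:R * w) | k <- iota 0 (n %/ m).+1].
pose s := undup (flatten (map f (iota 1 M))).
have lgs := lg (P + n * W)%N s (undup_uniq _).
have memf : forall a, a \in s -> exists2 m, (1 <= m <= M)%N &
     exists2 k, (k <= n %/ m)%N & a = p + m%:R * v + k%:R * (u + m%:R * w).
  move=> a; rewrite mem_undup => /flatten_mapP[m]; rewrite mem_iota => hm.
  move=> /mapP[k]; rewrite mem_iota => hk ->.
  exists m; first by lia.
  by exists k => //; lia.
have Hs : (size s)%:R <= C * (P + n * W)%:R + D.
  apply: lgs => a /memf[m hm [k hk ->]]; split.
    by have := Hf k m; congr T; ring.
  have hkn : (k <= n)%N by apply: leq_trans hk (leq_div _ _).
  have hkm : (k * m <= n)%N by apply: leq_trans (leq_mul hk (leqnn m)) (leq_trunc_div n m).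
  have rkn : k%:R <= n%:R :> R by rewrite ler_nat.
  have rkm : k%:R * m%:R <= n%:R :> R by rewrite -natrM ler_nat.
  have rmM : m%:R <= M%:R :> R by rewrite ler_nat; lia.
  have e1 : `|p + m%:R * v + k%:R * (u + m%:R * w)| <= `|p| + m%:R * `|v| + (k%:R * `|u| + k%:R * m%:R * `|w|).
    apply: (le_trans (ler_normD _ _)); apply: lerD.
      by apply: (le_trans (ler_normD _ _)); rewrite normrM normr_nat.
    rewrite normrM normr_nat.
    apply: (le_trans (ler_wpM2l (ler0n _ k) (ler_normD _ _))).
    by rewrite normrM normr_nat mulrDr mulrA.
  apply: (le_trans e1).
  have h1 : m%:R * `|v| <= M%:R * `|v| by apply: ler_wpM2r.
  have h2 : k%:R * `|u| <= n%:R * `|u| by apply: ler_wpM2r.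
  have h3 : k%:R * m%:R * `|w| <= n%:R * `|w| by apply: ler_wpM2r.
  have h4 : n%:R * (`|u| + `|w|) <= n%:R * W%:R by apply: ler_wpM2l => //; apply: ltW.
  rewrite natrD natrM. 
  lra.
have uf : forall m, uniq (f m).
  move=> m; rewrite /f map_inj_uniq ?iota_uniq // => k1 k2 /eqP.
  by rewrite (inj_eq (addrI _)) (inj_eq (mulIf (s0 m))) eqr_nat => /eqP.
have cf : forall i j, i != j -> (count (mem (f j)) (f i) <= 1)%N.
  move=> i j ij; apply: count_le1 => // x y /mapP[k1 _ ->] /mapP[k2 _ ->].
  move=> /mapP[k1' _ e1] /mapP[k2' _ e2].
  by rewrite (@pair_prop R p u v w i j k1 k2 k1' k2' nq w0 ij e1 e2).
have ub := @union_bound _ f 1%N M uf cf.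
have ubr : (sumn (map (fun i => size (f i)) (iota 1 M)))%:R <= (size s)%:R + (M * M)%:R :> R.
  by rewrite -natrD ler_nat.
have lb : n%:R * (L%:R / 2) <= (sumn (map (fun i => size (f i)) (iota 1 M)))%:R :> R.
  apply: (le_trans (ler_wpM2l (ler0n _ n) (harm_big R L))).
  rewrite sumnE big_map natr_sum /index_iota subSS subn0 -/M mulr_sumr.
  apply: ler_sum => m _; rewrite /f size_map size_iota.
  case: m => [|m]; first by rewrite invr0 mulr0.
  rewrite -(ler_pM2r (ltr0Sn _ m)) mulrAC -mulrA mulfV ?mulr1 ?pnatr_eq0 //.
  by rewrite -natrM ler_nat ltnW // ltn_ceil.
have hL' : n%:R * (C * W%:R + 1) <= n%:R * (L%:R / 2) :> R.
  apply: ler_wpM2l => //; rewrite ler_pdivlMr //; lra.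
move: Hs; rewrite natrD natrM => Hs.
lra.
Qed.

Theorem lemma3p1 (R : realType) (beta : R) (G : set 'M[R]_2) :
  beta != 0 ->
  psl2_lattice G ->
  (* stabilizer of oo: elements with c = 0 *)
  (forall g, G g /\ g 1 0 = 0 <->
     exists k : int, g = unip_upper R k \/ g = - unip_upper R k) ->
  (* stabilizer of 0: elements with b = 0 *)
  (forall g, G g /\ g 0 1 = 0 <->
     exists k : int, g = unip_lower (k%:~R * beta ^+ 2) \/
                     g = - unip_lower (k%:~R * beta ^+ 2)) ->
  linear_growth (trace_set G) ->
  forall A, G A -> forall i j, is_rational ((A *m A) i j).
Proof.
move=> bn0 [[detG oneG mulG invG negG] _ _] Hinf H0 lg.
have HU : forall k, G (unip_upper R k).
  by move=> k; have [_ /(_ (ex_intro _ k (or_introl erefl)))[]] := Hinf (unip_upper R k).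
have HL : forall k : int, G (unip_lower (k%:~R * beta ^+ 2)).
  by move=> k; have [_ /(_ (ex_intro _ k (or_introl erefl)))[]] := H0 (unip_lower (k%:~R * beta ^+ 2)).
have b2 : beta ^+ 2 != 0 by rewrite expf_neq0.
have KL : forall A, G A -> A 0 0 != 0 ->
    (exists q : rat, A 1 0 = ratr q * (beta ^+ 2 * A 0 0)) /\ (exists q : rat, A 0 1 = ratr q * A 0 0).
  move=> A GA a0.
  have Hf : forall k m : nat, trace_set G ((A 0 0 + A 1 1) + k%:R * A 1 0 + m%:R * (beta ^+ 2 * A 0 1)
                  + k%:R * m%:R * (beta ^+ 2 * A 0 0)).
    move=> k m; exists (A *m unip_upper R k *m unip_lower ((m%:Z)%:~R * beta ^+ 2)).
      exact: (mulG _ _ (mulG _ _ GA (HU _)) (HL _)).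
    rewrite trace_UL -!pmulrn; ring.
  have w0 : beta ^+ 2 * A 0 0 != 0 by rewrite mulf_neq0.
  split; first exact: AL lg w0 Hf.
  have Hf' : forall k m : nat, trace_set G ((A 0 0 + A 1 1) + k%:R * (beta ^+ 2 * A 0 1) + m%:R * A 1 0
                  + k%:R * m%:R * (beta ^+ 2 * A 0 0)).
    by move=> k m; have := Hf m k; congr trace_set; ring.
  have [q hq] := @AL R _ _ _ _ _ lg w0 Hf'.
  exists q; apply: (mulfI b2); rewrite hq; ring.
have KL' : forall A, G A -> A 1 1 != 0 ->
    (exists q : rat, A 1 0 = ratr q * (beta ^+ 2 * A 1 1)) /\ (exists q : rat, A 0 1 = ratr q * A 1 1).
  move=> A GA a0.
  have Hf : forall k m : nat, trace_set G ((A 0 0 + A 1 1) + k%:R * A 1 0 + m%:R * (beta ^+ 2 * A 0 1)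
                  + k%:R * m%:R * (beta ^+ 2 * A 1 1)).
    move=> k m; exists (A *m unip_lower ((m%:Z)%:~R * beta ^+ 2) *m unip_upper R k).
      exact: (mulG _ _ (mulG _ _ GA (HL _)) (HU _)).
    rewrite trace_LU -!pmulrn; ring.
  have w0 : beta ^+ 2 * A 1 1 != 0 by rewrite mulf_neq0.
  split; first exact: AL lg w0 Hf.
  have Hf' : forall k m : nat, trace_set G ((A 0 0 + A 1 1) + k%:R * (beta ^+ 2 * A 0 1) + m%:R * A 1 0
                  + k%:R * m%:R * (beta ^+ 2 * A 1 1)).
    by move=> k m; have := Hf m k; congr trace_set; ring.
  have [q hq] := @AL R _ _ _ _ _ lg w0 Hf'.
  exists q; apply: (mulfI b2); rewrite hq; ring.
have [rb hrb] : exists rb : rat, beta ^+ 2 = ratr rb.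
  pose g := unip_upper R 1 *m unip_lower ((1 : int)%:~R * beta ^+ 2).
  have Gg : G g by apply: mulG.
  have [u1 u2 u3 u4] := up_ent R 1; have [l1 l2 l3 l4] := @lo_ent R ((1 : int)%:~R * beta ^+ 2).
  have g00 : g 0 0 = 1 + beta ^+ 2 by rewrite /g mul22 u1 u2 l1 l3; ring.
  have g10 : g 1 0 = beta ^+ 2 by rewrite /g mul22 u3 u4 l1 l3; ring.
  have gpos : 0 < 1 + beta ^+ 2 by apply: ltr_pwDl => //; apply: sqr_ge0.
  have [[q hq] _] := KL g Gg ltac:(by rewrite g00 gt_eqF).
  move: hq; rewrite g00 g10 => hq.
  have q0 : ratr q != 0 :> R.
    by apply/eqP => e; move: hq; rewrite e mul0r => /eqP; rewrite (negbTE b2).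
  exists ((1 - q) / q); rewrite fmorph_div rmorphB rmorph1.
  apply: (mulfI q0); rewrite [ratr q * (_ / _)]mulrC divfK //.
  have h1 : 1 = ratr q * (1 + beta ^+ 2).
    by apply: (mulIf b2); rewrite mul1r {1}hq; ring.
  transitivity (ratr q * (1 + beta ^+ 2) - ratr q :> R); first ring.
  by rewrite -h1.
move=> A GA.
have dA := detG A GA.
have [c0|c0] := eqVneq (A 1 0) 0.
  have [k [eA|eA]] := (Hinf A).1 (conj GA c0); rewrite eA in dA *.
    apply: (@sq_rat R _ 1 1 k%:~R 0 1) => //;
      rewrite !mxE /= ?rmorph1 ?rmorph0 ?rmorph_int; ring.
  apply: (@sq_rat R _ (-1) 1 k%:~R 0 1) => //;
    rewrite !mxE /= ?rmorph1 ?rmorph0 ?rmorph_int; ring.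
have [b0|b0] := eqVneq (A 0 1) 0.
  have [k [eA|eA]] := (H0 A).1 (conj GA b0); rewrite eA in dA *.
    apply: (@sq_rat R _ 1 1 0 (k%:~R * rb) 1) => //;
      rewrite !mxE /= ?rmorph1 ?rmorph0 ?rmorphM ?rmorph_int ?hrb; ring.
  apply: (@sq_rat R _ (-1) 1 0 (k%:~R * rb) 1) => //;
    rewrite !mxE /= ?rmorph1 ?rmorph0 ?rmorphM ?rmorph_int ?hrb; ring.
have [a0|a0] := eqVneq (A 0 0) 0; have [d0|d0] := eqVneq (A 1 1) 0.
- move: dA; rewrite det22 a0 d0 => dA.
  move=> i j; rewrite mul22.
  case: (ord2P i) => ->; case: (ord2P j) => ->; rewrite ?a0 ?d0.
  + exists (-1); rewrite rmorphN rmorph1 -dA; ring.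
  + exists 0; rewrite rmorph0; ring.
  + exists 0; rewrite rmorph0; ring.
  + exists (-1); rewrite rmorphN rmorph1 -dA; ring.
- have [[q4 h4] [q3 h3]] := KL' A GA d0.
  apply: (@sq_rat R _ (A 1 1) 0 q3 (q4 * rb) 1) => //.
  + by rewrite a0 rmorph0 mul0r.
  + by rewrite h4 hrb rmorphM mulrA.
  + by rewrite rmorph1 mul1r.
- have [[q1 h1] [q2 h2]] := KL A GA a0.
  apply: (@sq_rat R _ (A 0 0) 1 q2 (q1 * rb) 0) => //.
  + by rewrite rmorph1 mul1r.
  + by rewrite h1 hrb rmorphM mulrA.
  + by rewrite d0 rmorph0 mul0r.
- have [[q1 h1] [q2 h2]] := KL A GA a0.
  have [_ [q3 h3]] := KL' A GA d0.
  have q30 : ratr q3 != 0 :> R.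
    by apply/eqP => e; move: b0; rewrite h3 e mul0r eqxx.
  have hd : A 1 1 = ratr (q2 / q3) * A 0 0.
    apply: (mulfI q30); rewrite -h3 h2 fmorph_div mulrA [ratr q3 * _]mulrC divfK //.
  apply: (@sq_rat R _ (A 0 0) 1 q2 (q1 * rb) (q2 / q3)) => //.
  + by rewrite rmorph1 mul1r.
  + by rewrite h1 hrb rmorphM mulrA.
Qed.
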